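(* Let $(\Omega,\mathcal{F},P)=([0,1],\mathcal{B}([0,1]),\lambda)$ with $\lambda$ Lebesgue measure. Let $(\varepsilon_n)\subset(0,1)$ be a sequence with $\varepsilon_n\to0$ and, for each $n$, let $S^n_t=0$ for $t\in[0,1)$ and $S^n_1(\omega)=-\frac{1}{\sqrt{\omega}}$ for $\omega\in[0,\varepsilon_n)$, $S^n_1(\omega)=\frac{1}{(1-\omega)^{1/(n+1)}}$ for $\omega\in[\varepsilon_n,1]$, where $(\varepsilon_n)$ is chosen such that $E[S^n_1]=1$ for all $n$. Consider the filtration generated by $(S^n)_{n\in\mathbb{N}}$ (so that predictable strategies are deterministic and the terminal value of a portfolio in the first $n$ assets has the form $\sum_{k=1}^n c_kS^k_1$ with constants $c_k\in\mathbb{R}$). Then: (1) for $n\in\mathbb{N}$ and $c_1,\dots,c_n\in\mathbb{R}$ such that $X_1=\sum_{k=1}^nc_kS^k_1\ge-1$ a.s., one has $\sum_{k\in G_+}c_k\le\sum_{k\in G_-}|c_k|$, where $G_+=\{j:c_j>0\}$, $G_-=\{j:c_j<0\}$; (2) $P=\lambda$ is a separating measure for $\mathcal{X}$, i.e. $E_P[X_1]\le0$ for all $X\in\mathcal{X}$.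
   Context: For this market, $\mathcal{X}^n_1$ denotes the set of stochastic integrals $(\mathbf{H}\bullet\mathbf{S}^n)$, $\mathbf{S}^n=(S^1,\dots,S^n)$, with $\mathbf{H}$ $\mathbb{R}^n$-valued predictable $\mathbf{S}^n$-integrable and $(\mathbf{H}\bullet\mathbf{S}^n)_t\ge-1$ for all $t$; $\mathcal{X}_1$ is the closure of $\bigcup_{n\ge1}\mathcal{X}^n_1$ in the Emery topology (metric $d_{\mathbb{S}}(X,Y)=\sup_{K}E[\sup_{t\le1}|(K\bullet(X-Y))_t|\wedge1]$ over simple predictable $K$, $\|K\|_\infty\le1$), and $\mathcal{X}=\bigcup_{\lambda>0}\lambda\mathcal{X}_1$. *)

(* Defs.v *)
From mathcomp Require Import all_boot all_order all_algebra.
From mathcomp Require Import all_classical all_reals all_analysis.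
Import Order.TTheory GRing.Theory Num.Theory.
Import numFieldNormedType.Exports.
Local Open Scope classical_set_scope.
Local Open Scope ring_scope.

Set Implicit Arguments.
Unset Strict Implicit.
Unset Printing Implicit Defensive.

(* Omega = [0,1] with Lebesgue measure; random variables are functions R -> R
   considered on `[0,1]. *)

(* Terminal value S^n_1 of the n-th asset (n >= 1); S^n_t = 0 for t < 1. *)
Definition Sn (R : realType) (eps : nat -> R) (n : nat) (w : R) : R :=
  if w < eps n then - (Num.sqrt w)^-1
  else (powR (1 - w) (n.+1%:R)^-1)^-1.

Definition portfolio (R : realType) (eps : nat -> R) (n : nat) (c : nat -> R)
  (w : R) : R := \sum_(1 <= k < n.+1) c k * Sn eps k w.

Definition Xn1 (R : realType) (eps : nat -> R) (n : nat) : set (R -> R) :=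
  [set f | exists c : nat -> R, f = portfolio eps n c /\
     {ae (@lebesgue_measure R), forall w, `[0, 1]%classic w -> -1 <= f w}].

(* Emery distance between two processes that vanish on [0,1) and jump at 1:
   d(X,Y) = E[ |X_1 - Y_1| /\ 1 ]. *)
Definition emery_dist (R : realType) (f g : R -> R) : \bar R :=
  (\int[@lebesgue_measure R]_(w in `[0%R, 1%R]) (Num.min `|f w - g w| 1)%:E)%E.

(* X_1 : closure of \bigcup_{n>=1} X^n_1 in the Emery topology *)
Definition X1 (R : realType) (eps : nat -> R) : set (R -> R) :=
  [set X | measurable_fun (`[0%R, 1%R]%classic : set R) X /\
     exists u : nat -> (R -> R),
       (forall m, exists2 n, (0 < n)%N & Xn1 eps n (u m)) /\
       (fun m => emery_dist (u m) X) @ \oo --> 0%:E].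

Definition calX (R : realType) (eps : nat -> R) : set (R -> R) :=
  [set X | exists2 lam : R, 0 < lam &
     exists2 Y, X1 eps Y & X = (fun w => lam * Y w)].

(* Main.v *)
Require Import Defs.
From mathcomp Require Import all_boot all_order all_algebra.
From mathcomp Require Import all_classical all_reals all_analysis.
Import Order.TTheory GRing.Theory Num.Theory.
From mathcomp Require Import measurable_realfun.
From mathcomp Require Import lra.
Import numFieldNormedType.Exports.
Local Open Scope classical_set_scope.
Local Open Scope ring_scope.

Section S.
Context {R : realType}.

Lemma measurable_inv : measurable_fun [set: R] (@GRing.inv R).
Proof.
rewrite -(setUv [set (0:R)]).
apply/measurable_funU => //; first exact: measurableC.
split; first exact: measurable_fun_set1.
apply: measurable_realfun.open_continuous_measurable_fun.
  by rewrite openC; apply: accessible_closed_set1; apply: hausdorff_accessible; exact: Rhausdorff.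
by move=> x /set_mem /eqP x0; apply: inv_continuous.
Qed.

Lemma measurable_Sn (eps : nat -> R) k : measurable_fun [set: R] (Sn eps k).
Proof.
apply: measurable_fun_ifT.
- exact: measurable_fun_ltr.
- apply: measurableT_comp; first exact: oppr_measurable.
  apply: measurableT_comp; first exact: measurable_inv.
  apply: continuous_measurable_fun; exact: sqrt_continuous.
- apply: measurableT_comp; first exact: measurable_inv.
  have h1 := @measurable_powR R (k.+1%:R)^-1.
  have h2 : measurable_fun [set: R] (fun x : R => 1 - x) by apply: measurable_funB.
  have := measurableT_comp h1 h2.
  exact.
Qed.

Local Notation mu := (@lebesgue_measure R).
Local Notation D := (`[0%R, 1%R]%classic : set R).

Lemma mD : measurable D. Proof. exact: measurable_itv. Qed.

Lemma integrable_of_int1 (f : R -> R) : measurable_fun [set: R] f ->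
  (\int[mu]_(w in D) (f w)%:E = 1%:E)%E -> mu.-integrable D (EFin \o f).
Proof.
move=> mf hf; apply/integrableP; split.
  by apply/measurable_EFinP; exact: measurable_funS mf.
have mf' : measurable_fun D (EFin \o f).
  by apply/measurable_EFinP; exact: measurable_funS mf.
rewrite integralE in hf.
have ha : (0 <= \int[mu]_(w in D) (EFin \o f)^\+ w)%E.
  by apply: integral_ge0 => x _; exact: funepos_ge0.
have hb : (0 <= \int[mu]_(w in D) (EFin \o f)^\- w)%E.
  by apply: integral_ge0 => x _; exact: funeneg_ge0.
move: ha hb hf.
set a := (\int[mu]_(w in D) _)%E; set b := (\int[mu]_(w in D) _)%E.
move=> ha hb hab.
have [afin bfin] : (a < +oo)%E /\ (b < +oo)%E.
  clear -ha hb hab; move: a b ha hb hab => [a| |] [b| |] //= *; split; exact: ltry.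
change (\int[mu]_(x in D) (abse \o (EFin \o f)) x < +oo)%E.
rewrite fune_abse ge0_integralD//.
- exact: lte_add_pinfty.
- exact: measurable_funepos.
- exact: measurable_funeneg.
Qed.

Lemma eps_lb (eps : nat -> R) : (forall k, (0 < k)%N -> 0 < eps k) ->
  forall n, exists2 d : R, 0 < d & forall k, (0 < k)%N -> (k <= n)%N -> d <= eps k.
Proof.
move=> he; elim=> [|n [d d0 hd]].
  by exists 1 => // k k0 kn; move: k0 kn; case: k.
exists (Num.min d (eps n.+1)); first by rewrite lt_min d0 he.
move=> k k0; rewrite leq_eqVlt => /orP[/eqP ->|kn]; first by rewrite ge_min lexx orbT.
by rewrite ge_min hd.
Qed.

Lemma sum_c_le0 (eps : nat -> R) n c : (forall k, (0 < k)%N -> 0 < eps k) ->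
  {ae mu, forall w, D w -> -1 <= portfolio eps n c w} ->
  \sum_(1 <= k < n.+1) c k <= 0.
Proof.
move=> he [N [mN N0 sub]].
rewrite leNgt; apply/negP => s0.
set s := \sum_(1 <= k < n.+1) c k in s0.
have [d0 d00 hd0] := eps_lb eps he n.
set d := Num.min d0 (Num.min (s ^+ 2) 1).
have d0pos : 0 < d by rewrite /d !lt_min d00 exprn_gt0 // ltr01.
have : `]0, d[%classic `<=` N.
  move=> w /=; rewrite in_itv /= => /andP[w0 wd].
  apply: contrapT => Nw.
  have : (~` N) w by [].
  move/(subsetC sub) => /contrapT.
  have Dw : D w by rewrite /= in_itv /= (ltW w0) /=; apply: (ltW (lt_le_trans wd _)); rewrite /d !ge_min lexx !orbT.
  move/(_ Dw).
  rewrite /portfolio.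
  rewrite (eq_big_nat _ _ (F2 := fun k => c k * (- (Num.sqrt w)^-1))); last first.
    move=> k /andP[k1 kn]; rewrite /Sn ifT //.
    apply: (lt_le_trans wd); apply: (le_trans _ (hd0 k k1 _)); last by rewrite -ltnS.
    by rewrite /d ge_min lexx.
  rewrite -mulr_suml -/s.
  have sw : Num.sqrt w < s.
    rewrite -(ger0_norm (ltW s0)) -sqrtr_sqr ltr_sqrt ?exprn_gt0 //.
    apply: (lt_le_trans wd); by rewrite /d !ge_min lexx !orbT.
  have sw0 : 0 < Num.sqrt w by rewrite sqrtr_gt0.
  rewrite mulrN lerN2 -(mulr1 1) => h.
  move: h; rewrite mulr1 ler_pdivrMr // mul1r => h.
  by move: (lt_le_trans sw h); rewrite ltxx.
move=> sub2.
have := le_measure mu (mem_set (measurable_itv `]0, d[)) (mem_set mN) sub2.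
move=> h; have h2 : (mu `]0%R, d[ <= 0)%E by apply: (le_trans h); rewrite le_eqVlt; apply/orP; left; apply/eqP; exact: N0.
move: h2; rewrite lebesgue_measure_itv /= lte_fin d0pos /= sube0 lee_fin.
by rewrite leNgt d0pos.
Qed.

Lemma part1 (eps : nat -> R) n c : (forall k, (0 < k)%N -> 0 < eps k) ->
  {ae mu, forall w, D w -> -1 <= portfolio eps n c w} ->
  \sum_(1 <= k < n.+1 | 0 < c k) c k <= \sum_(1 <= k < n.+1 | c k < 0) `|c k|.
Proof.
move=> he hae; rewrite -subr_le0 big_mkcond [X in _ - X]big_mkcond -sumrB.
rewrite (eq_bigr c); first exact: sum_c_le0 hae.
move=> k _; have [c0|c0|->] := ltgtP (c k) 0.
- by rewrite sub0r ltr0_norm // opprK.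
- by rewrite subr0.
- by rewrite ?subr0 ?ltxx.
Qed.

Definition gK (K x : R) := Num.min (Num.max x (-1) + 1) (K + 1).

Ltac mm := repeat match goal with
 | |- context [Num.max ?a ?b] => case: (leP a b) => ?
 | |- context [Num.min ?a ?b] => case: (leP a b) => ?
end.

Lemma gK_ge0 K x : 0 <= K -> 0 <= gK K x.
Proof. move=> K0; rewrite /gK; mm; lra. Qed.

Lemma gK_le K x : gK K x <= Num.max x (-1) + 1.
Proof. by rewrite /gK ge_min lexx. Qed.

Lemma gK_lip K x y : 0 <= K ->
  gK K y <= gK K x + (K + 1) * Num.min `|x - y| 1.
Proof.
move=> K0; rewrite /gK.
have [h|h] := leP 0 (x - y).
  rewrite ger0_norm //; mm; nra.
rewrite ltr0_norm //; mm; nra.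
Qed.

Lemma gK_dec K y : 0 <= K ->
  gK K y = Num.min (Num.max y 0) K + (1 - Num.min (Num.max (- y) 0) 1).
Proof. move=> K0; rewrite /gK; mm; lra. Qed.

End S.

Section S2.
Variable R : realType.
Local Notation mu := (@lebesgue_measure R).
Local Notation D := (`[0%R, 1%R]%classic : set R).
Lemma port_int (eps : nat -> R) n c :
  (forall k, (0 < k)%N -> (k <= n)%N ->
     (\int[mu]_(w in D) (Sn eps k w)%:E = 1%:E)%E) ->
  mu.-integrable D (EFin \o portfolio eps n c) /\
  (\int[mu]_(w in D) (portfolio eps n c w)%:E = (\sum_(1 <= k < n.+1) c k)%:E)%E.
Proof.
move=> hE.
pose h k w := if (0 < k)%N && (k <= n)%N then c k * Sn eps k w else 0.
have ih k : mu.-integrable D (EFin \o h k).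
  have [hk|hk] := boolP ((0 < k)%N && (k <= n)%N).
    have /andP[k0 kn] := hk.
    have hint : mu.-integrable D (fun w => ((c k)%:E * (Sn eps k w)%:E)%E).
      apply: integrableZl.
      exact: mD.
      exact: (integrable_of_int1 _ (measurable_Sn eps k) (hE k k0 kn)).
    apply: (@eq_integrable _ _ _ mu D mD _ _ _ hint) => w _ /=; by rewrite /h hk.
  apply: (@eq_integrable _ _ _ mu D mD (cst 0%E)); first by move=> w _; rewrite /h (negbTE hk).
  exact: integrable0.
have pE w : portfolio eps n c w = \sum_(1 <= k < n.+1) h k w.
  rewrite /portfolio; apply: eq_big_nat => k /andP[k0 kn].
  have kn' : (k <= n)%N by rewrite -ltnS.
  by rewrite /h k0 kn'.
have pE' : (fun w => (portfolio eps n c w)%:E) = (fun w => \sum_(1 <= k < n.+1) (EFin \o h k) w)%E.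
  by apply/funext => w; rewrite pE sumEFin.
split.
  rewrite (_ : EFin \o portfolio eps n c = (fun w => (portfolio eps n c w)%:E)) // pE'.
  apply: integrable_sum; first exact: mD.
  by move=> k _; exact: ih.
rewrite pE' (@integral_sum _ _ _ mu D mD _ (fun k => EFin \o h k) ih).
rewrite -sumEFin; apply: eq_big_nat => k /andP[k0 kn].
have kn' : (k <= n)%N by rewrite -ltnS.
have hint : mu.-integrable D (EFin \o Sn eps k).
  exact: (integrable_of_int1 _ (measurable_Sn eps k) (hE k k0 kn')).
have -> : (\int[mu]_(x in D) (EFin \o h k) x = \int[mu]_(x in D) ((c k)%:E * (Sn eps k x)%:E))%E.
  by apply: eq_integral => w _; rewrite /= /h k0 kn'.
by rewrite integralZl // hE // mule1.
Qed.

Lemma int_cst1 : (\int[mu]_(w in D) (1%:E : \bar R) = 1%:E)%E.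
Proof.
rewrite integral_cst; last exact: mD.
rewrite mul1e; move: (@lebesgue_measure_itv R `[0%R, 1%R]); rewrite /= lte01 /= sube0 => h; exact: h.
Qed.

Lemma measurable_gK K (f : R -> R) : measurable_fun D f ->
  measurable_fun D (fun w => gK K (f w)).
Proof.
move=> mf; rewrite /gK.
apply: measurable_minr; last exact: measurable_cst.
apply: measurable_funD; last exact: measurable_cst.
by apply: measurable_maxr => //; exact: measurable_cst.
Qed.

Lemma measurable_md (f g : R -> R) : measurable_fun D f -> measurable_fun D g ->
  measurable_fun D (fun w => Num.min `|f w - g w| 1).
Proof.
move=> mf mg; apply: measurable_minr; last exact: measurable_cst.
apply: measurableT_comp => //; exact: measurable_funB.
Qed.

Lemma bound_gK (eps : nat -> R) n c (Y : R -> R) (K : R) :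
  (forall k, (0 < k)%N -> 0 < eps k) ->
  (forall k, (0 < k)%N -> (k <= n)%N ->
     (\int[mu]_(w in D) (Sn eps k w)%:E = 1%:E)%E) ->
  {ae mu, forall w, D w -> -1 <= portfolio eps n c w} ->
  measurable_fun D Y -> 0 <= K ->
  (\int[mu]_(w in D) (gK K (Y w))%:E <=
     1%:E + (K + 1)%:E * emery_dist (portfolio eps n c) Y)%E.
Proof.
move=> he hE hae mY K0.
set u := portfolio eps n c.
have [iu Iu] := port_int eps n c hE.
have s0 := sum_c_le0 eps n c he hae.
have mu_ : measurable_fun D u.
  by apply/measurable_EFinP; exact: (measurable_int _ iu).
have h1 : (\int[mu]_(w in D) (gK K (Y w))%:E <=
    \int[mu]_(w in D) ((gK K (u w))%:E + ((K + 1)%:E * (Num.min `|u w - Y w| 1)%:E)))%E.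
  apply: ge0_le_integral.
  - exact: mD.
  - by move=> w _; rewrite lee_fin gK_ge0.
  - by apply/measurable_EFinP; exact: measurable_gK.
  - apply: emeasurable_funD; first by apply/measurable_EFinP; exact: measurable_gK.
    apply: measurable_funeM; apply/measurable_EFinP; exact: measurable_md.
  - by move=> w _; rewrite -EFinM -EFinD lee_fin gK_lip.
have mgu : measurable_fun D (fun w => (gK K (u w))%:E).
  by apply/measurable_EFinP; exact: measurable_gK.
have mmd : measurable_fun D (fun w => (Num.min `|u w - Y w| 1)%:E).
  by apply/measurable_EFinP; exact: measurable_md.
rewrite ge0_integralD // in h1; last 3 first.
- by move=> w _; rewrite lee_fin gK_ge0.
- move=> w _; apply: mule_ge0; rewrite lee_fin ?addr_ge0 // le_min normr_ge0 ler01.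
- exact: measurable_funeM mmd.
rewrite ge0_integralZl_EFin // in h1; last by rewrite addr_ge0.
have i1 : mu.-integrable D (EFin \o cst (1:R)).
  apply/integrableP; split; first by apply/measurable_EFinP; exact: measurable_cst.
  under eq_integral do rewrite /= normr1.
  by rewrite int_cst1 ltry.
have h3 : (\int[mu]_(w in D) (gK K (u w))%:E <= 1%:E)%E.
  apply: (@le_trans _ _ (\int[mu]_(w in D) (Num.max (u w) (-1) + 1)%:E)%E).
    apply: ge0_le_integral.
    - exact: mD.
    - by move=> w _; rewrite lee_fin gK_ge0.
    - exact: mgu.
    - apply/measurable_EFinP; apply: measurable_funD; last exact: measurable_cst.
      by apply: measurable_maxr => //; exact: measurable_cst.
    - by move=> w _; rewrite lee_fin gK_le.
  have -> : (\int[mu]_(w in D) (Num.max (u w) (-1) + 1)%:E = \int[mu]_(w in D) (u w + 1)%:E)%E.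
    apply: ae_eq_integral.
    - exact: mD.
    - apply/measurable_EFinP; apply: measurable_funD; last exact: measurable_cst.
      by apply: measurable_maxr => //; exact: measurable_cst.
    - apply/measurable_EFinP; apply: measurable_funD => //; exact: measurable_cst.
    - case: hae => N [mN N0 sub]; exists N; split => // w /= hw; apply: sub => /= hw2; apply: hw => Dw; rewrite max_l //; exact: hw2.
  have hD := @integralD _ _ _ mu D mD _ _ iu i1.
  have -> : (\int[mu]_(w in D) (u w + 1)%:E = \int[mu]_(w in D) (u w)%:E + \int[mu]_(w in D) (1:R)%:E)%E.
    exact: hD.
  rewrite Iu int_cst1 -EFinD lee_fin; lra.
by apply: (le_trans h1); apply: leeD.
Qed.

Lemma gKY_le1 (eps : nat -> R) (Y : R -> R) (K : R) :
  (forall k, (0 < k)%N -> 0 < eps k) ->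
  (forall k, (0 < k)%N -> (\int[mu]_(w in D) (Sn eps k w)%:E = 1%:E)%E) ->
  X1 eps Y -> 0 <= K ->
  (\int[mu]_(w in D) (gK K (Y w))%:E <= 1%:E)%E.
Proof.
move=> he hE [mY [u [hu hcvg]]] K0.
have hb m : (\int[mu]_(w in D) (gK K (Y w))%:E <=
    1%:E + (K + 1)%:E * emery_dist (u m) Y)%E.
  have [n n0 [c [-> hae]]] := hu m.
  apply: (@bound_gK eps n c Y K he _ hae mY K0) => k k0 _; exact: hE.
have hc : ((fun m => 1%:E + (K + 1)%:E * emery_dist (u m) Y) @ \oo --> 1%:E)%E.
  rewrite -[X in _ --> X]adde0.
  apply: cvgeD => //; first exact: cvg_cst.
  rewrite -(mule0 (K + 1)%:E).
  by apply: cvgeZl.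
apply: (cvge_ge _ hc); exact: nearW.
Qed.

Lemma YpYq (Y : R -> R) : measurable_fun D Y ->
  (forall K, 0 <= K -> (\int[mu]_(w in D) (gK K (Y w))%:E <= 1%:E)%E) ->
  forall K, 0 <= K ->
  (\int[mu]_(w in D) (Num.min (Num.max (Y w) 0) K)%:E <=
   \int[mu]_(w in D) (Num.min (Num.max (- Y w) 0) 1)%:E)%E.
Proof.
move=> mY h K K0.
have mYp : measurable_fun D (fun w => Num.min (Num.max (Y w) 0) K).
  apply: measurable_minr; last exact: measurable_cst.
  by apply: measurable_maxr => //; exact: measurable_cst.
have mYq : measurable_fun D (fun w => Num.min (Num.max (- Y w) 0) 1).
  apply: measurable_minr; last exact: measurable_cst.
  apply: measurable_maxr; last exact: measurable_cst.
  by apply: measurableT_comp => //; exact: oppr_measurable.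
have mYq' : measurable_fun D (fun w => 1 - Num.min (Num.max (- Y w) 0) 1).
  by apply: measurable_funB => //; exact: measurable_cst.
have Yq0 w : 0 <= Num.min (Num.max (- Y w) 0) 1.
  by rewrite le_min le_max lexx orbT ler01.
have Yq1 w : 0 <= 1 - Num.min (Num.max (- Y w) 0) 1.
  by rewrite subr_ge0 ge_min lexx orbT.
have Yp0 w : 0 <= Num.min (Num.max (Y w) 0) K.
  by rewrite le_min le_max lexx orbT K0.
have hK := h K K0.
have eqK : (\int[mu]_(w in D) (gK K (Y w))%:E = 
   \int[mu]_(w in D) ((Num.min (Num.max (Y w) 0) K)%:E +
      (1 - Num.min (Num.max (- Y w) 0) 1)%:E))%E.
  by apply: eq_integral => w _; rewrite gK_dec.
rewrite eqK in hK.
rewrite ge0_integralD in hK; first last.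
- by apply/measurable_EFinP.
- by move=> w _; rewrite lee_fin.
- by apply/measurable_EFinP.
- by move=> w _; rewrite lee_fin.
- exact: mD.
have h1 : (1%:E = \int[mu]_(w in D) (1 - Num.min (Num.max (- Y w) 0) 1)%:E +
    \int[mu]_(w in D) (Num.min (Num.max (- Y w) 0) 1)%:E)%E.
  rewrite -ge0_integralD; first last.
  - by apply/measurable_EFinP.
  - by move=> w _; rewrite lee_fin.
  - by apply/measurable_EFinP.
  - by move=> w _; rewrite lee_fin.
  - exact: mD.
  rewrite -int_cst1; apply: eq_integral => w _.
  by rewrite -EFinD subrK.
rewrite h1 [X in (_ <= X)%E]addeC in hK.
have Bfin : (\int[mu]_(w in D) (1 - Num.min (Num.max (- Y w) 0) 1)%:E)%E \is a fin_num.
  rewrite ge0_fin_numE; last by apply: integral_ge0 => w _; rewrite lee_fin.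
  apply: (@le_lt_trans _ _ 1%:E); last exact: ltry.
  rewrite h1 leeDl //; apply: integral_ge0 => w _; rewrite lee_fin //.
by rewrite leeD2rE in hK.
Qed.

Lemma Yp_le (Y : R -> R) : measurable_fun D Y ->
  (forall K, 0 <= K -> (\int[mu]_(w in D) (gK K (Y w))%:E <= 1%:E)%E) ->
  (\int[mu]_(w in D) (Num.max (Y w) 0)%:E <=
   \int[mu]_(w in D) (Num.min (Num.max (- Y w) 0) 1)%:E)%E.
Proof.
move=> mY h.
pose g' (k : nat) w := (Num.min (Num.max (Y w) 0) k%:R)%:E.
have mg' k : measurable_fun D (g' k).
  apply/measurable_EFinP; apply: measurable_minr; last exact: measurable_cst.
  by apply: measurable_maxr => //; exact: measurable_cst.
have g'0 k w : D w -> (0 <= g' k w)%E.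
  by move=> _; rewrite lee_fin le_min le_max lexx orbT ler0n.
have nd : forall x, D x -> nondecreasing_seq (g'^~ x).
  move=> x _ a b ab; rewrite lee_fin /g'.
  have: (a%:R <= b%:R :> R) by rewrite ler_nat.
  by move=> hab; rewrite le_min ge_min lexx /= ge_min hab orbT.
have hc := @cvg_monotone_convergence _ _ _ mu D mD g' mg' (fun k w Dw => g'0 k w Dw) nd.
have hl : (\int[mu]_(x in D) limn (g'^~ x) = \int[mu]_(w in D) (Num.max (Y w) 0)%:E)%E.
  apply: eq_integral => x _; apply: cvg_lim => //.
  apply: cvg_near_cst.
  exists (Num.truncn (Num.max (Y x) 0)).+1 => // k /= Nk.
  rewrite /g' min_l //; apply: ltW; apply: (lt_le_trans (truncnS_gt _)).
  by rewrite ler_nat.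
rewrite hl in hc.
apply: (cvge_le _ hc); apply: nearW => k.
by apply: YpYq => //; exact: ler0n.
Qed.
End S2.

Theorem lemma6p2 (R : realType) (eps : nat -> R)
  (heps01 : forall n, (0 < n)%N -> 0 < eps n < 1)
  (heps0 : eps @ \oo --> 0)
  (hE : forall n, (0 < n)%N ->
     (\int[@lebesgue_measure R]_(w in `[0%R, 1%R]) (Sn eps n w)%:E = 1%:E)%E) :
  (forall (n : nat) (c : nat -> R),
     {ae (@lebesgue_measure R), forall w, `[0, 1]%classic w -> -1 <= portfolio eps n c w} ->
     \sum_(1 <= k < n.+1 | 0 < c k) c k <= \sum_(1 <= k < n.+1 | c k < 0) `|c k|)
  /\
  (forall X, calX eps X ->
     (\int[@lebesgue_measure R]_(w in `[0%R, 1%R]) (X w)%:E <= 0)%E).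
Proof.
have he k : (0 < k)%N -> 0 < eps k by move=> k0; have /andP[] := heps01 k k0.
split.
  by move=> n c hae; exact: part1 eps n c he hae.
move=> X [lam lam0 [Y hY ->]].
have mY := hY.1.
have h K (K0 : 0 <= K) := @gKY_le1 R eps Y K he hE hY K0.
have hle := @Yp_le R Y mY h.
have eX : (fun w => (lam * Y w)%:E) = (fun w => lam%:E * (Y w)%:E)%E.
  by apply/funext => w; rewrite EFinM.
rewrite eX integralE ge0_funeposM ?ge0_funenegM; [|exact: ltW|exact: ltW].
rewrite ge0_integralZl_EFin; first last.
- exact: ltW.
- apply: measurable_funepos; exact/measurable_EFinP.
- by move=> w _; exact: funepos_ge0.
- exact: mD.
rewrite ge0_integralZl_EFin; first last.
- exact: ltW.
- apply: measurable_funeneg; exact/measurable_EFinP.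
- by move=> w _; exact: funeneg_ge0.
- exact: mD.
rewrite sube_le0; apply: lee_wpmul2l; first by rewrite lee_fin ltW.
rewrite (_ : (fun w => (Y w)%:E) = EFin \o Y) // funerpos funerneg.
apply: (le_trans hle); apply: ge0_le_integral.
- exact: mD.
- by move=> w _; rewrite lee_fin le_min le_max lexx orbT ler01.
- apply/measurable_EFinP; apply: measurable_minr; last exact: measurable_cst.
  apply: measurable_maxr; last exact: measurable_cst.
  by apply: measurableT_comp => //; exact: oppr_measurable.
- apply/measurable_EFinP; apply: measurable_maxr; last exact: measurable_cst.
  by apply: measurableT_comp => //; exact: oppr_measurable.
- by move=> w _; rewrite lee_fin /= ge_min lexx.
Qed.
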